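(* Let $D$ be a connected locally finite C-homogeneous digraph and let $x\in VD$. Then neither the subdigraph induced by $N^+(x)$ nor the subdigraph induced by $N^-(x)$ is isomorphic to the directed cycle $C_4$ of length 4.
   Context: A digraph has an irreflexive, antisymmetric edge relation; connectedness and local finiteness refer to the underlying undirected graph. $D$ is C-homogeneous if every isomorphism between finite connected induced subdigraphs extends to an automorphism of $D$. $N^+(x)=\{y: xy\in ED\}$, $N^-(x)=\{y: yx\in ED\}$. *)

(* Defs.v *)
From Stdlib Require Import List.
From mathcomp Require Import all_boot.
Set Implicit Arguments. Unset Strict Implicit. Unset Printing Implicit Defensive.

Definition is_digraph (V : Type) (E : V -> V -> Prop) : Prop :=
  (forall x, ~ E x x) /\ (forall x y, E x y -> ~ E y x).

Definition uadj (V : Type) (E : V -> V -> Prop) (x y : V) : Prop := E x y \/ E y x.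

Definition finite_set (V : Type) (A : V -> Prop) : Prop :=
  exists l : list V, forall x, A x <-> In x l.

Definition locally_finite (V : Type) (E : V -> V -> Prop) : Prop :=
  forall x, finite_set (uadj E x).

Inductive connected_in (V : Type) (E : V -> V -> Prop) (A : V -> Prop) : V -> V -> Prop :=
| cin_refl x : A x -> connected_in E A x x
| cin_step x y z : A x -> uadj E x y -> connected_in E A y z -> connected_in E A x z.

Definition connected_digraph (V : Type) (E : V -> V -> Prop) : Prop :=
  forall x y : V, connected_in E (fun _ => True) x y.

Definition connected_set (V : Type) (E : V -> V -> Prop) (A : V -> Prop) : Prop :=
  forall x y, A x -> A y -> connected_in E A x y.

Definition partial_iso (V : Type) (E : V -> V -> Prop) (A B : V -> Prop) (f : V -> V) : Prop :=
  (forall x, A x -> B (f x)) /\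
  (forall x y, A x -> A y -> f x = f y -> x = y) /\
  (forall y, B y -> exists x, A x /\ f x = y) /\
  (forall x y, A x -> A y -> (E x y <-> E (f x) (f y))).

Definition automorphism (V : Type) (E : V -> V -> Prop) (g : V -> V) : Prop :=
  (forall x y, g x = g y -> x = y) /\ (forall y, exists x, g x = y) /\
  (forall x y, E x y <-> E (g x) (g y)).

Definition C_homogeneous (V : Type) (E : V -> V -> Prop) : Prop :=
  forall (A B : V -> Prop) (f : V -> V),
    finite_set A -> finite_set B -> connected_set E A -> connected_set E B ->
    partial_iso E A B f ->
    exists g, automorphism E g /\ forall x, A x -> g x = f x.

Definition out_nbhd (V : Type) (E : V -> V -> Prop) (x : V) : V -> Prop := fun y => E x y.
Definition in_nbhd (V : Type) (E : V -> V -> Prop) (x : V) : V -> Prop := fun y => E y x.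

Definition induced_iso_to (V W : Type) (E : V -> V -> Prop) (S : V -> Prop)
    (F : W -> W -> Prop) : Prop :=
  exists h : W -> V,
    (forall a b, h a = h b -> a = b) /\
    (forall y, S y <-> exists a, h a = y) /\
    (forall a b, E (h a) (h b) <-> F a b).

Definition C4_edge (i j : 'I_4) : Prop := nat_of_ord j = ((nat_of_ord i).+1 %% 4)%N.

(* Main.v *)
Require Import Defs.
From mathcomp Require Import all_boot.
From Stdlib Require Import List Classical ClassicalEpsilon.
Set Implicit Arguments. Unset Strict Implicit. Unset Printing Implicit Defensive.

Definition C4at (V : Type) (E : V -> V -> Prop) (c : V) :=
  induced_iso_to E (out_nbhd E c) C4_edge.

Ltac o4 a := let n := fresh "n" in let H := fresh "H" in case: a => [[|[|[|[|n]]]] H] //.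

Lemma i1 (a b1 b2 : 'I_4) : C4_edge a b1 -> C4_edge a b2 -> val b1 = val b2.
Proof. o4 a; o4 b1; o4 b2; rewrite /C4_edge /=; done. Qed.

Lemma i2 (a b1 b2 : 'I_4) : C4_edge b1 a -> C4_edge b2 a -> val b1 = val b2.
Proof. o4 a; o4 b1; o4 b2; rewrite /C4_edge /=; done. Qed.

Lemma i4 (a b d : 'I_4) : C4_edge a b -> val d <> val a -> val d <> val b ->
  (C4_edge b d /\ ~ C4_edge a d /\ ~ C4_edge d a) \/
  (C4_edge d a /\ ~ C4_edge d b /\ ~ C4_edge b d).
Proof.
o4 a; o4 b; o4 d; rewrite /C4_edge /=;
  first [ by left; repeat split | by right; repeat split | done ].
Qed.

Lemma L1 V (E : V -> V -> Prop) c y u1 u2 : C4at E c -> E c y -> E c u1 -> E c u2 ->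
  E y u1 -> E y u2 -> u1 = u2.
Proof.
case=> h [Hi [Hm He]] Hy H1 H2 Hy1 Hy2.
case: ((Hm y).1 Hy) => a ?; subst y.
case: ((Hm u1).1 H1) => b1 ?; subst u1.
case: ((Hm u2).1 H2) => b2 ?; subst u2.
by rewrite (val_inj (i1 ((He _ _).1 Hy1) ((He _ _).1 Hy2))).
Qed.

Lemma L2 V (E : V -> V -> Prop) c y u1 u2 : C4at E c -> E c y -> E c u1 -> E c u2 ->
  E u1 y -> E u2 y -> u1 = u2.
Proof.
case=> h [Hi [Hm He]] Hy H1 H2 Hy1 Hy2.
case: ((Hm y).1 Hy) => a ?; subst y.
case: ((Hm u1).1 H1) => b1 ?; subst u1.
case: ((Hm u2).1 H2) => b2 ?; subst u2.
by rewrite (val_inj (i2 ((He _ _).1 Hy1) ((He _ _).1 Hy2))).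
Qed.

Lemma L4 V (E : V -> V -> Prop) c y z u : C4at E c -> E c y -> E c z -> E c u ->
  E y z -> u <> y -> u <> z ->
  (E z u /\ ~ uadj E y u) \/ (E u y /\ ~ uadj E u z).
Proof.
case=> h [Hi [Hm He]] Hy Hz Hu Hyz Huy Huz.
case: ((Hm y).1 Hy) => a ?; subst y.
case: ((Hm z).1 Hz) => b ?; subst z.
case: ((Hm u).1 Hu) => d ?; subst u.
have Hda : val d <> val a by move=> /val_inj ?; subst.
have Hdb : val d <> val b by move=> /val_inj ?; subst.
case: (i4 ((He _ _).1 Hyz) Hda Hdb) => [[H1 [H2 H3]]|[H1 [H2 H3]]]; [left|right];
  (split; [exact: (He _ _).2 H1|]); case=> /(He _ _); tauto.
Qed.

Lemma L5h V (E : V -> V -> Prop) c (h : 'I_4 -> V) (i0 i1 i2 i3 : 'I_4) :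
  (forall a b, h a = h b -> a = b) ->
  (forall y, out_nbhd E c y <-> exists a, h a = y) ->
  (forall a b, E (h a) (h b) <-> C4_edge a b) ->
  C4_edge i0 i1 -> C4_edge i1 i2 -> C4_edge i2 i3 -> C4_edge i3 i0 ->
  ~ C4_edge i0 i2 -> ~ C4_edge i2 i0 -> ~ C4_edge i1 i3 -> ~ C4_edge i3 i1 ->
  val i0 <> val i1 -> val i0 <> val i2 -> val i0 <> val i3 ->
  val i1 <> val i2 -> val i2 <> val i3 -> val i1 <> val i3 ->
  exists p q r, E c p /\ E c q /\ E c r /\ E (h i0) p /\ E p q /\ E q r /\ E r (h i0) /\
    ~ uadj E (h i0) q /\ ~ uadj E p r /\
    h i0 <> p /\ h i0 <> q /\ h i0 <> r /\ p <> q /\ q <> r /\ p <> r.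
Proof.
move=> Hi Hm He e01 e12 e23 e30 n02 n20 n13 n31 d01 d02 d03 d12 d23 d13.
have mem : forall a, E c (h a) by move=> a; apply/(Hm (h a)); exists a.
have ne : forall a b, val a <> val b -> h a <> h b by move=> a b H /Hi ?; subst.
exists (h i1), (h i2), (h i3).
do 3 (split; first exact: mem).
do 4 (split; first exact/He).
split; first by case=> /He.
split; first by case=> /He.
do 5 (split; first exact: ne).
exact: ne.
Qed.

Lemma L5 V (E : V -> V -> Prop) c y : C4at E c -> E c y ->
  exists p q r, E c p /\ E c q /\ E c r /\ E y p /\ E p q /\ E q r /\ E r y /\
    ~ uadj E y q /\ ~ uadj E p r /\
    y <> p /\ y <> q /\ y <> r /\ p <> q /\ q <> r /\ p <> r.
Proof.
case=> h [Hi [Hm He]] Hy.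
case: ((Hm y).1 Hy) => a ?; subst y.
clear Hy; o4 a.
- by apply: (@L5h _ _ _ _ _ (@Ordinal 4 1 isT) (@Ordinal 4 2 isT) (@Ordinal 4 3 isT)).
- by apply: (@L5h _ _ _ _ _ (@Ordinal 4 2 isT) (@Ordinal 4 3 isT) (@Ordinal 4 0 isT)).
- by apply: (@L5h _ _ _ _ _ (@Ordinal 4 3 isT) (@Ordinal 4 0 isT) (@Ordinal 4 1 isT)).
- by apply: (@L5h _ _ _ _ _ (@Ordinal 4 0 isT) (@Ordinal 4 1 isT) (@Ordinal 4 2 isT)).
Qed.

Lemma C4_ex V (E : V -> V -> Prop) c : C4at E c -> exists y, E c y.
Proof. case=> h [_ [Hm _]]; exists (h ord0); apply/(Hm (h ord0)); by exists ord0. Qed.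

Lemma uadj_sym V (E : V -> V -> Prop) x y : uadj E x y -> uadj E y x.
Proof. by case=> H; [right|left]. Qed.

Lemma cin_trans V (E : V -> V -> Prop) A x y z :
  connected_in E A x y -> connected_in E A y z -> connected_in E A x z.
Proof.
elim=> [w Aw|a b c Aa Hab _ IH] // H.
exact: cin_step Aa Hab (IH H).
Qed.

Lemma hub V (E : V -> V -> Prop) (A : V -> Prop) c :
  A c -> (forall y, A y -> y = c \/ uadj E y c) -> connected_set E A.
Proof.
move=> Ac H y z Ay Az.
have H1 : forall w, A w -> connected_in E A w c.
  move=> w Aw; case: (H w Aw) => [->|Hw]; first exact: cin_refl.
  exact: cin_step Aw Hw (cin_refl _ Ac).
have H2 : forall w, A w -> connected_in E A c w.
  move=> w Aw; case: (H w Aw) => [->|Hw]; first exact: cin_refl.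
  exact: cin_step Ac (uadj_sym Hw) (cin_refl _ Aw).
exact: cin_trans (H1 _ Ay) (H2 _ Az).
Qed.

Definition dom V (ps : list (V*V)) y := exists p, In p ps /\ fst p = y.
Definition cod V (ps : list (V*V)) y := exists p, In p ps /\ snd p = y.

Lemma homog V (E : V -> V -> Prop) (HC : C_homogeneous E) (ps : list (V*V)) :
  (forall p q, In p ps -> In q ps -> (fst p = fst q <-> snd p = snd q)) ->
  (forall p q, In p ps -> In q ps -> (E (fst p) (fst q) <-> E (snd p) (snd q))) ->
  connected_set E (dom ps) -> connected_set E (cod ps) ->
  exists g, automorphism E g /\ forall p, In p ps -> g (fst p) = snd p.
Proof.
move=> Hf He Cd Cc.
pose f y := match excluded_middle_informative (dom ps y) with
  | left H => snd (proj1_sig (constructive_indefinite_description _ H)) | right _ => y end.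
have fE : forall p, In p ps -> f (fst p) = snd p.
  move=> p Hp; rewrite /f; case: excluded_middle_informative => [H|H]; last first.
    by case: H; exists p.
  case: (constructive_indefinite_description _ H) => q [Hq Hqp] /=.
  exact/(Hf q p Hq Hp).
have fin : forall (g : V*V -> V), finite_set (fun y => exists p, In p ps /\ g p = y).
  move=> g; exists (List.map g ps) => y; split.
  - case=> p [H1 H2]; apply/in_map_iff; by exists p.
  - case/in_map_iff=> p [H1 H2]; by exists p.
case: (HC (dom ps) (cod ps) f (fin fst) (fin snd) Cd Cc) => [|g [Hg Hgf]].
  split; [|split; [|split]].
  - move=> y [p [Hp <-]]; exists p; by rewrite fE.
  - move=> y1 y2 [p [Hp <-]] [q [Hq <-]]; rewrite !fE //; by move/(Hf p q Hp Hq).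
  - move=> y [p [Hp <-]]; exists (fst p); split; [by exists p | exact: fE].
  - move=> y1 y2 [p [Hp <-]] [q [Hq <-]]; rewrite !fE //; exact: He.
exists g; split => // p Hp; rewrite Hgf ?fE //; by exists p.
Qed.

Lemma aut_C4 V (E : V -> V -> Prop) g c : automorphism E g -> C4at E c -> C4at E (g c).
Proof.
case=> gi [gs ge] [h [hi [hm he]]].
exists (fun a => g (h a)); split; [|split].
- move=> a b /gi; exact: hi.
- move=> y; split.
  + case: (gs y) => y' <- H.
    have : out_nbhd E c y' by exact: (ge _ _).2 H.
    case/hm => a <-; by exists a.
  + case=> a <-; apply: (ge _ _).1; apply/(hm (h a)); by exists a.
- move=> a b; rewrite -he; split; [exact: (ge _ _).2 | exact: (ge _ _).1].
Qed.

Lemma VT V (E : V -> V -> Prop) (HD : is_digraph E) (HC : C_homogeneous E) x :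
  C4at E x -> forall v, C4at E v.
Proof.
move=> Hx v.
case: (@homog V E HC [:: (x,v)]).
- by move=> p q /= [<-|[]] [<-|[]].
- move=> p q /= [<-|[]] [<-|[]] /=; split=> /(HD.1 _) [].
- apply: (@hub _ _ _ x); first by exists (x,v); split; [left|].
  by move=> y [p [/= [<-|[]] <-]]; left.
- apply: (@hub _ _ _ v); first by exists (x,v); split; [left|].
  by move=> y [p [/= [<-|[]] <-]]; left.
move=> g [Hg Hgx]; have <- : g x = v by apply: (Hgx (x,v)); left.
exact: aut_C4.
Qed.

Lemma arcT V (E : V -> V -> Prop) (HD : is_digraph E) (HC : C_homogeneous E) u v u' v' :
  E u v -> E u' v' -> exists g, automorphism E g /\ g u = u' /\ g v = v'.
Proof.
move=> H H'.
have n1 : u <> v by move=> e; subst; exact: HD.1 _ H.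
have n2 : u' <> v' by move=> e; subst; exact: HD.1 _ H'.
case: (@homog V E HC [:: (u,u'); (v,v')]).
- move=> p q /= [<-|[<-|[]]] [<-|[<-|[]]] //=; split=> // e; by [case: n1|case: n2].
- move=> p q /= [<-|[<-|[]]] [<-|[<-|[]]] //=; split=> //;
    try (move/(HD.1 _) => []); move=> ?; by [case: (HD.2 _ _ H)| case: (HD.2 _ _ H')].
- apply: (@hub _ _ _ u); first by exists (u,u'); split; [left|].
  move=> y [p [/= [<-|[<-|[]]] <-]]; [left|right; right] => //.
- apply: (@hub _ _ _ u'); first by exists (u,u'); split; [left|].
  move=> y [p [/= [<-|[<-|[]]] <-]]; [left|right; right] => //.
move=> g [Hg Hgx]; exists g; split=> //; split.
- by apply: (Hgx (u,u')); left.
- by apply: (Hgx (v,v')); right; left.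
Qed.

Lemma arc2T V (E : V -> V -> Prop) (HD : is_digraph E) (HC : C_homogeneous E) u v w u' v' w' :
  E u v -> E v w -> ~ uadj E u w -> E u' v' -> E v' w' -> ~ uadj E u' w' ->
  exists g, automorphism E g /\ g u = u' /\ g v = v' /\ g w = w'.
Proof.
move=> H1 H2 N H1' H2' N'.
have irr := HD.1; have asy := HD.2.
have d1 : u <> v by move=> e; subst; exact: irr _ H1.
have d2 : v <> w by move=> e; subst; exact: irr _ H2.
have d3 : u <> w by move=> e; subst; exact: asy _ _ H1 H2.
have d1' : u' <> v' by move=> e; subst; exact: irr _ H1'.
have d2' : v' <> w' by move=> e; subst; exact: irr _ H2'.
have d3' : u' <> w' by move=> e; subst; exact: asy _ _ H1' H2'.
case: (@homog V E HC [:: (u,u'); (v,v'); (w,w')]).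
- move=> p q /= [<-|[<-|[<-|[]]]] [<-|[<-|[<-|[]]]] //=; split=> // e;
    by [case: d1|case: d2|case: d3|case: d1'|case: d2'|case: d3'|
        case: d1 |case: d2 |case: d3 |case: d1'|case: d2'|case: d3'|
        case: d1; rewrite e|case: d2; rewrite e|case: d3; rewrite e|
        case: d1'; rewrite e|case: d2'; rewrite e|case: d3'; rewrite e].
- move=> p q /= [<-|[<-|[<-|[]]]] [<-|[<-|[<-|[]]]] //=; split=> //;
    first [ move/(irr _) => [] | move=> e; exfalso;
      first [ exact: asy _ _ H1 e | exact: asy _ _ H2 e | exact: asy _ _ H1' e
            | exact: asy _ _ H2' e | by apply: N; left | by apply: N; right
            | by apply: N'; left | by apply: N'; right ] ].
- apply: (@hub _ _ _ v); first by exists (v,v'); split; [right; left|].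
  move=> y [p [/= [<-|[<-|[<-|[]]]] <-]] /=; [right; left|left|right; right] => //.
- apply: (@hub _ _ _ v'); first by exists (v,v'); split; [right; left|].
  move=> y [p [/= [<-|[<-|[<-|[]]]] <-]] /=; [right; left|left|right; right] => //.
move=> g [Hg Hgx]; exists g; split=> //; split; [|split].
- by apply: (Hgx (u,u')); left.
- by apply: (Hgx (v,v')); right; left.
- by apply: (Hgx (w,w')); right; right; left.
Qed.

Lemma arc_in V (E : V -> V -> Prop) (HD : is_digraph E) (HC : C_homogeneous E) x0 :
  C4at E x0 -> forall w v, E w v -> exists z, E z w /\ E z v.
Proof.
move=> Hx w v Hwv.
case: (C4_ex Hx) => y Hy.
case: (L5 Hx Hy) => p [q [r [Hp [_ [_ [Hyp _]]]]]].
case: (arcT HD HC Hyp Hwv) => g [[_ [_ ge]] [<- <-]].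
by exists (g x0); split; apply: (ge _ _).1.
Qed.

Lemma arc2_in V (E : V -> V -> Prop) (HD : is_digraph E) (HC : C_homogeneous E) x0 :
  C4at E x0 -> forall u v w, E u v -> E v w -> ~ uadj E u w ->
  exists z, E z u /\ E z v /\ E z w.
Proof.
move=> Hx u v w H1 H2 N.
case: (C4_ex Hx) => y Hy.
case: (L5 Hx Hy) => p [q [r [Hp [Hq [_ [Hyp [Hpq [_ [_ [Nyq _]]]]]]]]]].
case: (arc2T HD HC Hyp Hpq Nyq H1 H2 N) => g [[_ [_ ge]] [<- [<- <-]]].
by exists (g x0); split; [|split]; apply: (ge _ _).1.
Qed.

Lemma NoDup_map_inj A B (f : A -> B) (l : list A) a b :
  NoDup (List.map f l) -> In a l -> In b l -> f a = f b -> a = b.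
Proof.
elim: l => [|c l IH] //= /NoDup_cons_iff [Hn Hd] [<-|Ha] [<-|Hb] // e.
- case: Hn; rewrite e; apply/in_map_iff; by exists b.
- case: Hn; rewrite -e; apply/in_map_iff; by exists a.
- exact: IH.
Qed.

Lemma php V (P : V -> Prop) (L : list V) (HL : forall y, P y <-> In y L) (f : V -> V)
  (Hs : forall b, P b -> exists a, P a /\ f a = b) a1 a2 :
  P a1 -> P a2 -> f a1 = f a2 -> a1 = a2.
Proof.
have dec : forall a b : V, {a = b} + {a <> b} := fun a b => excluded_middle_informative (a = b).
set L' := nodup dec L.
have HL' : forall y, P y <-> In y L' by move=> y; rewrite /L' nodup_In.
have ND : NoDup L' by apply: NoDup_nodup.
have ND' : NoDup (List.map f L').
  apply: (@NoDup_incl_NoDup _ L' (List.map f L') ND); first by rewrite length_map; exact: le_n.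
  move=> b /HL' /Hs [a [/HL' Ha <-]]; apply/in_map_iff; by exists a.
move=> H1 H2; exact: (NoDup_map_inj ND' ((HL' _).1 H1) ((HL' _).1 H2)).
Qed.

Lemma T1 V (E : V -> V -> Prop) (HD : is_digraph E) (HC : C_homogeneous E)
  (Hlf : locally_finite E) x0 (Hx : C4at E x0) w v z1 z2 :
  E w v -> E z1 w -> E z1 v -> E z2 w -> E z2 v -> z1 = z2.
Proof.
move=> Hwv H1w H1v H2w H2v.
have HVT := VT HD HC Hx.
case: (Hlf v) => l Hl.
pose b y := if excluded_middle_informative (E y v) then true else false.
have HL : forall y, E y v <-> In y (List.filter b l).
  move=> y; split => [H | /filter_In [H1 H2]].
  - apply/filter_In; split; first by apply/Hl; right.
    by rewrite /b; case: excluded_middle_informative.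
  - move: H2; rewrite /b; by case: excluded_middle_informative.
pose f y := match excluded_middle_informative (exists u, E y u /\ E u v) with
  | left H => proj1_sig (constructive_indefinite_description _ H) | right _ => y end.
have fE : forall y u, E y v -> E y u -> E u v -> f y = u.
  move=> y u Hyv Hyu Huv; rewrite /f; case: excluded_middle_informative => [H|H];
    last by case: H; exists u.
  case: (constructive_indefinite_description _ H) => u' [H1 H2] /=.
  exact: (L2 (HVT y) Hyv H1 Hyu H2 Huv).
apply: (@php V (fun y => E y v) _ HL f) => //.
- move=> c Hc; case: (arc_in HD HC Hx Hc) => z [Hzc Hzv]; exists z; split => //.
  exact: fE.
- by rewrite (fE _ _ H1v H1w Hwv) (fE _ _ H2v H2w Hwv).
Qed.

Lemma G V (E : V -> V -> Prop) (HD : is_digraph E) (HC : C_homogeneous E)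
  (Hlf : locally_finite E) x0 (Hx : C4at E x0) w v z u :
  E w v -> E z w -> E z v -> E v u -> ~ uadj E w u -> E z u.
Proof.
move=> Hwv Hzw Hzv Hvu N.
case: (arc2_in HD HC Hx Hwv Hvu N) => z' [H1 [H2 H3]].
by rewrite (T1 HD HC Hlf Hx Hwv Hzw Hzv H1 H2).
Qed.

Lemma main V (E : V -> V -> Prop) (HD : is_digraph E) (HC : C_homogeneous E)
  (Hlf : locally_finite E) x : ~ C4at E x.
Proof.
move=> Hx.
have HVT := VT HD HC Hx.
have asy := HD.2.
case: (C4_ex Hx) => a0 Ha0.
case: (L5 Hx Ha0) => a1 [a2 [a3 [Ha1 [Ha2 [Ha3 [E01 [E12 [E23 [E30 [N02 [N13 _]]]]]]]]]]].
case: (L5 (HVT a0) E01) => p [q [r [Hp [Hq [Hr [E1p [Epq [Eqr [Er1 [_ [_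
  [d1p [d1q [d1r [dpq [dqr dpr]]]]]]]]]]]]]]]].
have ii : forall s, E a0 s -> s <> a1 -> ~ E x s.
  by move=> s Hs ds Hxs; apply: ds; exact: (L1 Hx Ha0 Hxs Ha1 Hs E01).
have i : forall s, E a0 s -> s <> a1 -> E s a3 \/ E a3 s.
  move=> s Hs ds; case: (classic (uadj E a3 s)) => [[H|H]|N]; [by right|by left|].
  by case: (ii s Hs ds); apply: (G HD HC Hlf Hx E30 Ha3 Ha0 Hs N).
have X : forall s, E a0 s -> s <> a1 -> E s x \/ ~ uadj E x s.
  move=> s Hs ds; case: (classic (uadj E x s)) => [[H|H]|N]; [|by left|by right].
  by case: (ii s Hs ds).
have iii : forall s1 s2, E a0 s1 -> E a0 s2 -> E a3 s1 -> E a3 s2 -> s1 = s2.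
  move=> s1 s2 H1 H2 H1' H2'; exact: (L1 (HVT a3) E30 H1' H2' H1 H2).
case: (arc_in HD HC Hx Ha0) => z0 [Hz0x Hz0a0].
have iv : forall s1 s2, E a0 s1 -> E a0 s2 -> ~ uadj E x s1 -> ~ uadj E x s2 -> s1 = s2.
  move=> s1 s2 H1 H2 N1 N2.
  have K1 := G HD HC Hlf Hx Ha0 Hz0x Hz0a0 H1 N1.
  have K2 := G HD HC Hlf Hx Ha0 Hz0x Hz0a0 H2 N2.
  exact: (L1 (HVT z0) Hz0a0 K1 K2 H1 H2).
have v : forall s1 s2, E s1 x -> E s1 a3 -> E s2 x -> E s2 a3 -> s1 = s2.
  move=> s1 s2 H1 H1' H2 H2'; exact: (T1 HD HC Hlf Hx Ha3 H1 H1' H2 H2').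
have vi : forall s s', E s x -> E s a3 -> E s s' -> E a0 s' ->
    (E a3 s' /\ ~ uadj E x s') \/ (E s' x /\ ~ uadj E s' a3).
  move=> s s' H1 H2 H3 H4; apply: (L4 (HVT s) H1 H2 H3 Ha3).
  - by move=> e; subst; exact: asy _ _ Ha0 H4.
  - by move=> e; subst; exact: asy _ _ E30 H4.
have vip : E p x -> E p a3 -> E a3 q /\ ~ uadj E x q.
  move=> H1 H2; case: (vi _ _ H1 H2 Epq Hq) => // [[_ N]].
  by case: (i q Hq (nesym d1q)) => H; case: N; [left|right].
have viq : E q x -> E q a3 -> E a3 r /\ ~ uadj E x r.
  move=> H1 H2; case: (vi _ _ H1 H2 Eqr Hr) => // [[_ N]].
  by case: (i r Hr (nesym d1r)) => H; case: N; [left|right].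
have vir : E r x -> E r a3 -> False.
  move=> H1 H2; case: (vi _ _ H1 H2 Er1 E01) => [[H _]|[H _]].
  - by apply: N13; right.
  - exact: asy _ _ Ha1 H.
have Ap := i p Hp (nesym d1p). have Aq := i q Hq (nesym d1q). have Ar := i r Hr (nesym d1r).
have Xp := X p Hp (nesym d1p). have Xq := X q Hq (nesym d1q). have Xr := X r Hr (nesym d1r).
have Bpq : ~ (E a3 p /\ E a3 q) by case=> H1 H2; exact: dpq (iii _ _ Hp Hq H1 H2).
have Bqr : ~ (E a3 q /\ E a3 r) by case=> H1 H2; exact: dqr (iii _ _ Hq Hr H1 H2).
have Bpr : ~ (E a3 p /\ E a3 r) by case=> H1 H2; exact: dpr (iii _ _ Hp Hr H1 H2).
have Ypq : ~ (~ uadj E x p /\ ~ uadj E x q) by case=> H1 H2; exact: dpq (iv _ _ Hp Hq H1 H2).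
have Yqr : ~ (~ uadj E x q /\ ~ uadj E x r) by case=> H1 H2; exact: dqr (iv _ _ Hq Hr H1 H2).
have Ypr : ~ (~ uadj E x p /\ ~ uadj E x r) by case=> H1 H2; exact: dpr (iv _ _ Hp Hr H1 H2).
have Vpq : ~ (E p x /\ E p a3 /\ E q x /\ E q a3)
  by case=> H1 [H2 [H3 H4]]; exact: dpq (v _ _ H1 H2 H3 H4).
have Vqr : ~ (E q x /\ E q a3 /\ E r x /\ E r a3)
  by case=> H1 [H2 [H3 H4]]; exact: dqr (v _ _ H1 H2 H3 H4).
have Vpr : ~ (E p x /\ E p a3 /\ E r x /\ E r a3)
  by case=> H1 [H2 [H3 H4]]; exact: dpr (v _ _ H1 H2 H3 H4).
clear -Ap Aq Ar Xp Xq Xr Bpq Bqr Bpr Ypq Yqr Ypr Vpq Vqr Vpr vip viq vir.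
tauto.
Qed.

Definition r4 (i : 'I_4) : 'I_4 := @Ordinal 4 ((4 - val i) %% 4) (@ltn_pmod _ 4 isT).

Lemma r4K (a : 'I_4) : r4 (r4 a) = a.
Proof. apply: val_inj; o4 a. Qed.

Lemma r4E (a b : 'I_4) : C4_edge (r4 b) (r4 a) <-> C4_edge a b.
Proof. o4 a; o4 b; rewrite /C4_edge /=; done. Qed.

Lemma conn_sub V (E1 E2 : V -> V -> Prop) A x y :
  (forall a b, uadj E1 a b -> uadj E2 a b) -> connected_in E1 A x y -> connected_in E2 A x y.
Proof.
move=> Hs; elim=> [w Aw|a b c Aa Hab _ IH]; first exact: cin_refl.
exact: cin_step Aa (Hs _ _ Hab) IH.
Qed.

Lemma rev_C V (E : V -> V -> Prop) : C_homogeneous E -> C_homogeneous (fun a b => E b a).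
Proof.
move=> HC A B f FA FB CA CB [P1 [P2 [P3 P4]]].
have sw : forall a b, uadj (fun a b => E b a) a b -> uadj E a b by move=> a b [H|H]; [right|left].
case: (HC A B f FA FB).
- move=> a b Ha Hb; exact: conn_sub sw (CA a b Ha Hb).
- move=> a b Ha Hb; exact: conn_sub sw (CB a b Ha Hb).
- split=> //; split=> //; split=> // a b Ha Hb; exact: P4 b a Hb Ha.
move=> g [[gi [gs ge]] Hg]; exists g; split=> //; split=> //; split=> // a b; exact: ge.
Qed.

Theorem lemma3p3 (V : Type) (E : V -> V -> Prop)
  (HD : is_digraph E) (Hconn : connected_digraph E) (Hlf : locally_finite E)
  (HC : C_homogeneous E) (x : V) :
  ~ induced_iso_to E (out_nbhd E x) C4_edge /\ ~ induced_iso_to E (in_nbhd E x) C4_edge.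
Proof.
split; first exact: (main HD HC Hlf).
case=> h [hi [hm he]].
have HD' : is_digraph (fun a b => E b a).
  by split=> [a|a b H1 H2]; [exact: HD.1 | exact: HD.2 _ _ H1 H2].
have Hlf' : locally_finite (fun a b => E b a).
  move=> v; case: (Hlf v) => l Hl; exists l => y; rewrite -Hl /uadj; tauto.
apply: (main HD' (rev_C HC) Hlf' (x := x)).
exists (fun a => h (r4 a)); split; [|split].
- move=> a b /hi H; by rewrite -(r4K a) H r4K.
- move=> y; split.
  + case/hm => a <-; exists (r4 a); by rewrite r4K.
  + case=> a <-; apply/hm; by exists (r4 a).
- move=> a b /=; rewrite -r4E; exact: he.
Qed.
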